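(* Let $S$ be a monoid. Then (1) the ternary commutator $[1,1,1]$ is the smallest congruence $\delta$ of $S$ such that $S/\delta$ embeds into a $2$-nilpotent group; (2) $[1,1,1]$ equals the smallest cancellative congruence of $S$ containing $[[1,1],1]\vee[1,[1,1]]$, equals the smallest cancellative congruence containing $[[1,1],1]$, and equals the smallest cancellative congruence containing $\rho_2$.
   Context: Commutators are those of the semigroup $(S,\cdot)$: for congruences $\alpha_1,\dots,\alpha_k$, $M(\alpha_1,\dots,\alpha_k)$ is the subsemigroup of $S^{\{0,1\}^k}$ generated by all $g$ such that for some $i$ and $(a,b)\in\alpha_i$, $g(x)=a$ if $x_i=0$ and $g(x)=b$ if $x_i=1$; $[\alpha_1,\dots,\alpha_k]$ is the smallest congruence $\delta$ such that for all $f\in M(\alpha_1,\dots,\alpha_k)$: if $(f(x0),f(x1))\in\delta$ for all $x\in\{0,1\}^{k-1}\setminus\{(1,\dots,1)\}$ then $(f(1,\dots,1,0),f(1,\dots,1,1))\in\delta$. $1$ is the total congruence. A congruence $\sigma$ is cancellative if $S/\sigma$ is cancellative. $q_1(x,y,z)=xy$, $q_2(x,y,z)=xyz_1yx$, and $\rho_2$ is the congruence generated by all pairs $(xyz_1yx,\ yxz_1xy)$ with $x,y,z_1\in S$. A $2$-nilpotent group has nilpotency class at most $2$. *)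

(* Defs.v *)
From mathcomp Require Import all_boot.
Set Implicit Arguments. Unset Strict Implicit. Unset Printing Implicit Defensive.

Definition rel_total (S : Type) : S -> S -> Prop := fun _ _ => True.

Definition rel_eq (S : Type) (R1 R2 : S -> S -> Prop) : Prop :=
  forall x y, R1 x y <-> R2 x y.

Definition rel_sub (S : Type) (R1 R2 : S -> S -> Prop) : Prop :=
  forall x y, R1 x y -> R2 x y.

Definition is_congruence (S : Type) (mul : S -> S -> S) (R : S -> S -> Prop) : Prop :=
  (forall x, R x x) /\ (forall x y, R x y -> R y x) /\
  (forall x y z, R x y -> R y z -> R x z) /\
  (forall a b c d, R a b -> R c d -> R (mul a c) (mul b d)).

Definition cong_gen (S : Type) (mul : S -> S -> S) (R : S -> S -> Prop) : S -> S -> Prop :=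
  fun x y => forall d, is_congruence mul d -> rel_sub R d -> d x y.

Definition cong_join (S : Type) (mul : S -> S -> S) (a b : S -> S -> Prop) : S -> S -> Prop :=
  cong_gen mul (fun x y => a x y \/ b x y).

Definition cancellative (S : Type) (mul : S -> S -> S) (R : S -> S -> Prop) : Prop :=
  (forall a x y, R (mul a x) (mul a y) -> R x y) /\
  (forall a x y, R (mul x a) (mul y a) -> R x y).

Definition canc_cong_gen (S : Type) (mul : S -> S -> S) (R : S -> S -> Prop) : S -> S -> Prop :=
  fun x y => forall d, is_congruence mul d -> cancellative mul d -> rel_sub R d -> d x y.

(* M(al_1, ..., al_k): subsemigroup of S^{{0,1}^k} generated by the
   "al_i-generators"; points of {0,1}^k are functions 'I_k -> bool,
   coordinate i (0-based) corresponds to al_{i+1}. *)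
Inductive inM (S : Type) (mul : S -> S -> S) (k : nat) (al : 'I_k -> S -> S -> Prop)
  : (('I_k -> bool) -> S) -> Prop :=
| M_gen (i : 'I_k) (a b : S) (f : ('I_k -> bool) -> S) :
    al i a b -> (forall x, f x = if x i then b else a) -> inM mul al f
| M_mul (f g h : ('I_k -> bool) -> S) :
    inM mul al f -> inM mul al g -> (forall x, h x = mul (f x) (g x)) -> inM mul al h.

(* the point (y, b) of {0,1}^(n+1): first n coordinates y, last coordinate b *)
Definition cube_ext (n : nat) (y : 'I_n -> bool) (b : bool) : 'I_n.+1 -> bool :=
  fun i => if unlift ord_max i is Some j then y j else b.

Definition comm_closed (S : Type) (mul : S -> S -> S) (n : nat)
  (al : 'I_n.+1 -> S -> S -> Prop) (d : S -> S -> Prop) : Prop :=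
  forall f, inM mul al f ->
    (forall y : 'I_n -> bool, (exists j, y j = false) ->
        d (f (cube_ext y false)) (f (cube_ext y true))) ->
    d (f (cube_ext (fun _ => true) false)) (f (cube_ext (fun _ => true) true)).

Definition commutator (S : Type) (mul : S -> S -> S) (n : nat)
  (al : 'I_n.+1 -> S -> S -> Prop) : S -> S -> Prop :=
  fun x y => forall d, is_congruence mul d -> comm_closed mul al d -> d x y.

Definition comm2 (S : Type) (mul : S -> S -> S) (a b : S -> S -> Prop) : S -> S -> Prop :=
  @commutator S mul 1 (fun i : 'I_2 => if val i == 0 then a else b).

Definition comm3 (S : Type) (mul : S -> S -> S) (a b c : S -> S -> Prop) : S -> S -> Prop :=
  @commutator S mul 2 (fun i : 'I_3 => match val i with 0 => a | 1 => b | _ => c end).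

Definition rho2 (S : Type) (mul : S -> S -> S) : S -> S -> Prop :=
  cong_gen mul (fun u v => exists x y z,
     u = mul x (mul y (mul z (mul y x))) /\ v = mul y (mul x (mul z (mul x y)))).

Definition is_group (G : Type) (gm : G -> G -> G) (g1 : G) (gi : G -> G) : Prop :=
  (forall x y z, gm x (gm y z) = gm (gm x y) z) /\
  (forall x, gm g1 x = x) /\ (forall x, gm x g1 = x) /\
  (forall x, gm (gi x) x = g1) /\ (forall x, gm x (gi x) = g1).

Definition gcomm (G : Type) (gm : G -> G -> G) (gi : G -> G) (x y : G) : G :=
  gm (gm (gi x) (gi y)) (gm x y).

Definition nilpotent2 (G : Type) (gm : G -> G -> G) (g1 : G) (gi : G -> G) : Prop :=
  forall x y z, gcomm gm gi (gcomm gm gi x y) z = g1.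

(* S/d embeds into a 2-nilpotent group: an injective semigroup homomorphism
   S/d -> G, i.e. a homomorphism phi : S -> G whose kernel is exactly d *)
Definition embeds_2nil_group (S : Type) (mul : S -> S -> S) (d : S -> S -> Prop) : Prop :=
  exists (G : Type) (gm : G -> G -> G) (g1 : G) (gi : G -> G),
    is_group gm g1 gi /\ nilpotent2 gm g1 gi /\
    exists phi : S -> G,
      (forall a b, phi (mul a b) = gm (phi a) (phi b)) /\
      (forall a b, phi a = phi b <-> d a b).

(* Main.v *)
Require Import Defs.
From mathcomp Require Import all_boot.
From Stdlib Require Import Setoid Morphisms ProofIrrelevance FunctionalExtensionality PropExtensionality IndefiniteDescription.
Set Implicit Arguments. Unset Strict Implicit.


Section GroupLemmas.
Variables (G : Type) (gm : G -> G -> G) (g1 : G) (gi : G -> G).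
Hypothesis Hg : is_group gm g1 gi.
Local Infix "⊗" := gm (at level 40, left associativity).

Lemma gA x y z : x ⊗ (y ⊗ z) = x ⊗ y ⊗ z. Proof. by case: Hg. Qed.
Lemma g1l x : g1 ⊗ x = x. Proof. by case: Hg => _ []. Qed.
Lemma g1r x : x ⊗ g1 = x. Proof. by case: Hg => _ [] _ []. Qed.
Lemma gVl x : gi x ⊗ x = g1. Proof. by case: Hg => _ [] _ [] _ []. Qed.
Lemma gVr x : x ⊗ gi x = g1. Proof. by case: Hg => _ [] _ [] _ []. Qed.
Lemma gKl x y : gi x ⊗ (x ⊗ y) = y. Proof. by rewrite gA gVl g1l. Qed.
Lemma gKl' x y : x ⊗ (gi x ⊗ y) = y. Proof. by rewrite gA gVr g1l. Qed.
Lemma gKr x y : y ⊗ x ⊗ gi x = y. Proof. by rewrite -gA gVr g1r. Qed.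
Lemma gKr' x y : y ⊗ gi x ⊗ x = y. Proof. by rewrite -gA gVl g1r. Qed.
Lemma gcanl x y z : x ⊗ y = x ⊗ z -> y = z.
Proof. by move=> h; rewrite -(gKl x y) h gKl. Qed.
Lemma gcanr x y z : y ⊗ x = z ⊗ x -> y = z.
Proof. by move=> h; rewrite -(gKr x y) h gKr. Qed.
Lemma gii x : gi (gi x) = x.
Proof. by apply: (@gcanl (gi x)); rewrite gVr gVl. Qed.
Lemma gi1 : gi g1 = g1.
Proof. by apply: (@gcanl g1); rewrite gVr g1l. Qed.
Lemma giM x y : gi (x ⊗ y) = gi y ⊗ gi x.
Proof. by apply: (@gcanl (x ⊗ y)); rewrite gVr -gA (gA y) gVr g1l gVr. Qed.
Lemma gsolve_l x y z : x ⊗ y = z -> y = gi x ⊗ z.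
Proof. by move=> <-; rewrite gKl. Qed.
Lemma gsolve_r x y z : x ⊗ y = z -> x = z ⊗ gi y.
Proof. by move=> <-; rewrite gKr. Qed.

Definition central c := forall x, c ⊗ x = x ⊗ c.
Lemma cent1 : central g1. Proof. by move=> x; rewrite g1l g1r. Qed.
Lemma centM a b : central a -> central b -> central (a ⊗ b).
Proof. by move=> ha hb x; rewrite -gA hb gA ha gA. Qed.
Lemma centV a : central a -> central (gi a).
Proof.
move=> ha x; apply: (@gcanl a); by rewrite gKl' gA ha gKr.
Qed.
Lemma centA a x y : central a -> a ⊗ x ⊗ y = x ⊗ a ⊗ y.
Proof. by move=> ha; rewrite ha. Qed.
Lemma centB a x y : central a -> x ⊗ a ⊗ y = x ⊗ y ⊗ a.
Proof. by move=> ha; rewrite -gA ha gA. Qed.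

Definition gcommd x y := gcomm gm gi x y.
Lemma gcomm1 c z : gcomm gm gi c z = g1 -> c ⊗ z = z ⊗ c.
Proof.
rewrite /gcomm => h.
have h2 := f_equal (gm (z ⊗ c)) h.
by rewrite g1r gA -giM gVr g1l in h2.
Qed.
Lemma swapg a b : a ⊗ b = b ⊗ a ⊗ gcomm gm gi a b.
Proof. by rewrite /gcomm -giM gA gVr g1l. Qed.

Definition pw (u : G) (b : bool) := if b then u else g1.
Lemma pw1 b : pw g1 b = g1. Proof. by case: b. Qed.
Lemma pwcent c b : central c -> central (pw c b).
Proof. by case: b => //= _; apply: cent1. Qed.
Lemma pwconj u b q : pw u b ⊗ q = q ⊗ pw (gi q ⊗ u ⊗ q) b.
Proof. by case: b => /=; rewrite ?g1l ?g1r // !gA gVr g1l. Qed.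
Lemma pwswap a b s t : pw a s ⊗ pw b t = pw b t ⊗ pw a s ⊗ pw (gcomm gm gi a b) (s && t).
Proof. by case: s; case: t => /=; rewrite ?g1l ?g1r // swapg. Qed.
Lemma pwmul a b s : pw a s ⊗ pw b s = pw (a ⊗ b) s.
Proof. by case: s => //=; rewrite g1l. Qed.

Definition cz x y := exists c, central c /\ x ⊗ y = y ⊗ x ⊗ c.
Lemma czS x y : cz x y -> cz y x.
Proof.
move=> [c [hc h]]; exists (gi c); split; first exact: centV.
by rewrite h gKr.
Qed.
Lemma czV x y : cz x y -> cz (gi x) y.
Proof.
move=> [c [hc h]]; exists (gi c); split; first exact: centV.
have h2 : y ⊗ x = x ⊗ y ⊗ gi c by rewrite h gKr.
apply: (@gcanr x); rewrite (centB _ _ (centV hc)) gKr'.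
by rewrite -gA h2 gA gKl.
Qed.
Lemma czM x y y' : cz x y -> cz x y' -> cz x (y ⊗ y').
Proof.
move=> [c [hc h]] [c' [hc' h']]; exists (c' ⊗ c); split; first exact: centM.
by rewrite gA h -gA (hc y') gA -(gA y) h' !gA (centB _ _ hc').
Qed.
Lemma comm_invr K v : K ⊗ v = v ⊗ K -> K ⊗ gi v = gi v ⊗ K.
Proof.
move=> h; apply: (@gcanl v); rewrite gKl' gA -h gKr //.
Qed.

Lemma nil_from_malcev (T : G -> Prop) : T g1 ->
  (forall X, exists t s, T t /\ T s /\ X = t ⊗ gi s) ->
  (forall x y z, T x -> T y -> T z -> x ⊗ y ⊗ z ⊗ y ⊗ x = y ⊗ x ⊗ z ⊗ x ⊗ y) ->
  nilpotent2 gm g1 gi.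
Proof.
move=> hT1 hgen hid.
have Kc : forall t s, T t -> T s -> central (gcomm gm gi t s).
  move=> t s ht hs; rewrite /gcomm -giM.
  set A := t ⊗ s; set B := s ⊗ t.
  have hAB : A ⊗ B = B ⊗ A.
    have := hid t s g1 ht hs hT1; rewrite !g1r -!gA => h; exact h.
  have hAvB : forall v, T v -> A ⊗ v ⊗ B = B ⊗ v ⊗ A.
    move=> v hv; have := hid t s v ht hs hv; rewrite -!gA => h; exact h.
  have e1 : gi B ⊗ A = A ⊗ gi B.
    apply: (@gcanl B); apply: (@gcanr B); by rewrite gKl' -gA gKr' hAB.
  have e2 : forall v, T v -> gi B ⊗ A ⊗ v = v ⊗ (gi B ⊗ A).
    move=> v hv; rewrite [in RHS]e1; apply: (@gcanl B); rewrite gA gKl'.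
    apply: (@gcanr B); by rewrite (gA v A) (gA B (v ⊗ A)) gKr' (gA B v A) hAvB.
  set K := gi B ⊗ A in e2 *.
  move=> X; have [v [w [hv [hw ->]]]] := hgen X.
  by rewrite gA e2 // -gA (comm_invr (e2 w hw)) gA.
have czT : forall t s, T t -> T s -> cz t s.
  by move=> t s ht hs; exists (gcomm gm gi t s); split; [exact: Kc | exact: swapg].
have czX : forall X Y, cz X Y.
  move=> X Y; have [t [s [ht [hs ->]]]] := hgen X; have [u [w [hu [hw ->]]]] := hgen Y.
  have h1 : forall a, T a -> cz a (u ⊗ gi w).
    by move=> a ha; apply: czM; [exact: czT | apply: czS; apply: czV; apply: czS; exact: czT].
  apply: czS; apply: czM; [apply: czS; exact: h1 | apply: czS; apply: czV; exact: h1].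
move=> X Y Z.
have [c [hc h]] := czX X Y.
have -> : gcomm gm gi X Y = c by rewrite /gcomm -giM h gKl.
by rewrite /gcomm (hc Z) -giM gVl.
Qed.
End GroupLemmas.
Section R.
Variables (G : Type) (gm : G -> G -> G) (g1 : G) (gi : G -> G).
Hypothesis Hg : is_group gm g1 gi.
Hypothesis Hn : nilpotent2 gm g1 gi.
Local Infix "⊗" := gm (at level 40, left associativity).
Local Notation pw := (pw g1).
Local Notation central := (central gm).
Lemma ccomm a b : central (gcomm gm gi a b).
Proof. move=> z; exact: (gcomm1 Hg (Hn a b z)). Qed.
Lemma pwc a b s : central (pw (gcomm gm gi a b) s).
Proof. by apply: (pwcent Hg); apply: ccomm. Qed.

Lemma L1 X Y z z' : central z -> X ⊗ z ⊗ (Y ⊗ z') = X ⊗ Y ⊗ (z ⊗ z').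
Proof. by move=> hz; rewrite !(gA Hg) (centB Hg _ _ hz). Qed.

Lemma reorder P Q u1 u2 u3 v1 v2 v3 (s1 s2 s3 : bool) :
  let A1 := gi Q ⊗ u1 ⊗ Q in let A2 := gi Q ⊗ u2 ⊗ Q in let A3 := gi Q ⊗ u3 ⊗ Q in
  P ⊗ pw u1 s1 ⊗ pw u2 s2 ⊗ pw u3 s3 ⊗ (Q ⊗ pw v1 s1 ⊗ pw v2 s2 ⊗ pw v3 s3) =
  P ⊗ Q ⊗ pw (A1 ⊗ v1) s1 ⊗ pw (A2 ⊗ v2) s2 ⊗ pw (A3 ⊗ v3) s3 ⊗
   (pw (gcomm gm gi A3 v2) (s3 && s2) ⊗ pw (gcomm gm gi A2 v1) (s2 && s1) ⊗
    pw (gcomm gm gi A3 v1) (s3 && s1)).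
Proof.
move=> A1 A2 A3.
have hA : forall u s, pw u s ⊗ Q = Q ⊗ pw (gi Q ⊗ u ⊗ Q) s.
  by move=> u s; rewrite (pwconj Hg).
rewrite !(gA Hg) -[P ⊗ _ ⊗ _ ⊗ pw u3 s3 ⊗ Q](gA Hg) hA -/A3 !(gA Hg).
rewrite -[P ⊗ _ ⊗ pw u2 s2 ⊗ Q](gA Hg) hA -/A2 !(gA Hg).
rewrite -[P ⊗ pw u1 s1 ⊗ Q](gA Hg) hA -/A1.
rewrite !(gA Hg).
rewrite -[_ ⊗ pw A3 s3 ⊗ pw v1 s1](gA Hg) (pwswap Hg) !(gA Hg).
rewrite (centB Hg _ _ (pwc _ _ _)).
rewrite -[_ ⊗ pw A2 s2 ⊗ pw v1 s1](gA Hg) (pwswap Hg) !(gA Hg).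
rewrite (centB Hg _ _ (pwc _ _ _)) (centB Hg _ _ (pwc _ _ _)).
rewrite (centB Hg _ _ (pwc _ _ _)) (centB Hg _ _ (pwc _ _ _)).
rewrite -[_ ⊗ pw A3 s3 ⊗ pw v2 s2](gA Hg) (pwswap Hg) !(gA Hg).
rewrite (centB Hg _ _ (pwc _ _ _)) (centB Hg _ _ (pwc _ _ _)).
rewrite (centB Hg _ _ (pwc A3 v2 _)).
rewrite -[_ ⊗ pw A1 s1 ⊗ pw v1 s1](gA Hg) (pwmul Hg) .
rewrite -[_ ⊗ pw A2 s2 ⊗ pw v2 s2](gA Hg) (pwmul Hg) .
rewrite -[_ ⊗ pw A3 s3 ⊗ pw v3 s3](gA Hg) (pwmul Hg) .
done.
Qed.

Variable k : nat.
Variables (i j l : 'I_k).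
Variable Good : (('I_k -> bool) -> G) -> Prop.
Hypothesis GoodC : Good (fun _ => g1).
Hypothesis GoodM : forall Z Z', (forall x, central (Z x)) -> (forall x, central (Z' x)) ->
  Good Z -> Good Z' -> Good (fun x => Z x ⊗ Z' x).
Hypothesis Good1 : forall c, central c -> Good (fun x => pw c (x l && x j)).
Hypothesis Good2 : forall c, central c -> Good (fun x => pw c (x j && x i)).
Hypothesis Good3 : forall c, central c -> Good (fun x => pw c (x l && x i)).

Definition NF (F : ('I_k -> bool) -> G) := exists P U1 U2 U3 Z, Good Z /\ (forall x, central (Z x)) /\
  forall x, F x = P ⊗ pw U1 (x i) ⊗ pw U2 (x j) ⊗ pw U3 (x l) ⊗ Z x.

Lemma NF_ext F F' : (forall x, F' x = F x) -> NF F -> NF F'.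
Proof.
move=> h [P [U1 [U2 [U3 [Z [h1 [h2 h3]]]]]]].
by exists P, U1, U2, U3, Z; do 2! split => //; move=> x; rewrite h h3.
Qed.

Lemma NF_gen t u v : t = i \/ t = j \/ t = l -> NF (fun x => if x t then v else u).
Proof.
move=> ht; exists u.
have hc : forall x : 'I_k -> bool, central (g1) by move=> _; apply: (cent1 Hg).
case: ht => [->|[->|->]].
- exists (gi u ⊗ v), g1, g1, (fun _ => g1); do 2! split => //; move=> x.
  by rewrite !(pw1 g1) !(g1r Hg); case: (x i) => /=; rewrite ?(gKl' Hg) ?(g1r Hg).
- exists g1, (gi u ⊗ v), g1, (fun _ => g1); do 2! split => //; move=> x.
  by rewrite !(pw1 g1) !(g1r Hg); case: (x j) => /=; rewrite ?(gKl' Hg) ?(g1r Hg).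
- exists g1, g1, (gi u ⊗ v), (fun _ => g1); do 2! split => //; move=> x.
  by rewrite !(pw1 g1) !(g1r Hg); case: (x l) => /=; rewrite ?(gKl' Hg) ?(g1r Hg).
Qed.

Lemma NF_mul F F' : NF F -> NF F' -> NF (fun x => F x ⊗ F' x).
Proof.
move=> [P [U1 [U2 [U3 [Z [h1 [h2 h3]]]]]]] [Q [V1 [V2 [V3 [Z' [h1' [h2' h3']]]]]]].
pose A1 := gi Q ⊗ U1 ⊗ Q; pose A2 := gi Q ⊗ U2 ⊗ Q; pose A3 := gi Q ⊗ U3 ⊗ Q.
exists (P ⊗ Q), (A1 ⊗ V1), (A2 ⊗ V2), (A3 ⊗ V3).
exists (fun x => pw (gcomm gm gi A3 V2) (x l && x j) ⊗ pw (gcomm gm gi A2 V1) (x j && x i) ⊗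
    pw (gcomm gm gi A3 V1) (x l && x i) ⊗ (Z x ⊗ Z' x)).
have hc : forall x, central (Z x ⊗ Z' x) by move=> x; apply: (centM Hg).
have c1 : forall x, central (pw (gcomm gm gi A3 V2) (x l && x j)) by move=> x; apply: pwc.
have c2 : forall x, central (pw (gcomm gm gi A2 V1) (x j && x i)) by move=> x; apply: pwc.
have c3 : forall x, central (pw (gcomm gm gi A3 V1) (x l && x i)) by move=> x; apply: pwc.
have c12 : forall x, central (pw (gcomm gm gi A3 V2) (x l && x j) ⊗ pw (gcomm gm gi A2 V1) (x j && x i))
  by move=> x; apply: (centM Hg).
split; last split.
-  apply: GoodM => //.
  + by move=> x; apply: (centM Hg).
  + apply: GoodM => //; last by apply: Good3; apply: ccomm.
    by apply: GoodM => //; [apply: Good1 | apply: Good2]; apply: ccomm.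
  + exact: GoodM.
- by move=> x; apply: (centM Hg) => //; apply: (centM Hg).
- move=> x; rewrite h3 h3' L1 // reorder.
  by rewrite !(gA Hg).
Qed.
End R.

Lemma ceL n (y : 'I_n -> bool) b t : cube_ext y b (lift ord_max t) = y t.
Proof. by rewrite /cube_ext liftK. Qed.
Lemma ceM n (y : 'I_n -> bool) b : cube_ext y b ord_max = b.
Proof. by rewrite /cube_ext unlift_none. Qed.
Lemma split_ord n (t : 'I_n.+1) : t = ord_max \/ exists t', t = lift ord_max t'.
Proof. by case: (unliftP ord_max t) => [t' ->|->]; [right; exists t' | left]. Qed.
Lemma I1 (t : 'I_1) : t = ord0.
Proof. by apply: ord_inj; case: t => [[|]]. Qed.
Lemma I2 (t : 'I_2) : t = ord0 \/ t = ord_max.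
Proof. by case: t => [[|[|]]] // h; [left|right]; apply: ord_inj. Qed.

Section Cube.
Variables (G : Type) (gm : G -> G -> G) (g1 : G) (gi : G -> G).
Hypothesis Hg : is_group gm g1 gi.
Hypothesis Hn : nilpotent2 gm g1 gi.
Local Infix "⊗" := gm (at level 40, left associativity).
Local Notation pw := (pw g1).
Local Notation central := (central gm).
Variables (S : Type) (mul : S -> S -> S) (phi : S -> G).
Hypothesis hom : forall a b, phi (mul a b) = phi a ⊗ phi b.

Lemma ker_cong : is_congruence mul (fun a b => phi a = phi b).
Proof.
split; [by [] | split; [by move=> ?? -> | split; [by move=> ??? -> -> | by move=> a b c d h1 h2; rewrite !hom h1 h2]]].
Qed.

Lemma interch a b c d : central b -> central c -> a ⊗ b ⊗ (c ⊗ d) = a ⊗ c ⊗ (b ⊗ d).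
Proof. move=> hb hc; by rewrite (gA Hg) -(gA Hg a b c) hb (gA Hg) -(gA Hg _ b d). Qed.

Definition y11 : 'I_2 -> bool := fun _ => true.
Definition y00 : 'I_2 -> bool := fun _ => false.
Definition y01 : 'I_2 -> bool := fun t => t == ord_max.
Definition y10 : 'I_2 -> bool := fun t => t == ord0.
Definition Wf (Z : ('I_3 -> bool) -> G) (y : 'I_2 -> bool) :=
  Z (cube_ext y false) ⊗ gi (Z (cube_ext y true)).
Definition Good3 (Z : ('I_3 -> bool) -> G) :=
  Wf Z y11 ⊗ Wf Z y00 = Wf Z y01 ⊗ Wf Z y10.

Lemma Wcent Z y : (forall x, central (Z x)) -> central (Wf Z y).
Proof. move=> h; apply: (centM Hg) => //; exact: (centV Hg). Qed.

Lemma Good3M Z Z' : (forall x, central (Z x)) -> (forall x, central (Z' x)) ->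
  Good3 Z -> Good3 Z' -> Good3 (fun x => Z x ⊗ Z' x).
Proof.
move=> hZ hZ'.
have WM : forall y, Wf (fun x => Z x ⊗ Z' x) y = Wf Z y ⊗ Wf Z' y.
  move=> y; rewrite /Wf (giM Hg) [in RHS]interch.
  - by rewrite (centV Hg (hZ' _)).
  - exact: (centV Hg).
  - exact: hZ'.
rewrite /Good3 !WM => h h'.
rewrite interch; try by apply: Wcent.
rewrite h h' interch //; by apply: Wcent.
Qed.

Definition i3 : 'I_3 := lift ord_max ord0.
Definition j3 : 'I_3 := lift ord_max ord_max.
Definition l3 : 'I_3 := ord_max.

Lemma Good3C : Good3 (fun _ => g1).
Proof. by rewrite /Good3 /Wf (gi1 Hg) !(g1r Hg). Qed.
Lemma Good3_1 c : central c -> Good3 (fun x => pw c (x l3 && x j3)).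
Proof.
move=> hc; rewrite /Good3 /Wf /l3 /j3 !ceL !ceM /= (gi1 Hg) !(g1l Hg) !(g1r Hg).
done.
Qed.
Lemma Good3_2 c : central c -> Good3 (fun x => pw c (x j3 && x i3)).
Proof.
move=> hc; rewrite /Good3 /Wf /i3 /j3 !ceL.
rewrite !(gVr Hg) !(g1r Hg) //.
Qed.
Lemma Good3_3 c : central c -> Good3 (fun x => pw c (x l3 && x i3)).
Proof.
move=> hc; rewrite /Good3 /Wf /l3 /i3 !ceL !ceM /= (gi1 Hg) !(g1l Hg) !(g1r Hg).
done.
Qed.

Definition al3 : 'I_3 -> S -> S -> Prop :=
  fun i => match val i with 0 => @rel_total S | 1 => @rel_total S | _ => @rel_total S end.

Lemma NF3 f : inM mul al3 f -> NF gm g1 i3 j3 l3 Good3 (fun x => phi (f x)).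
Proof.
elim=> [t a b f' _ hf'| f1 f2 h _ N1 _ N2 hh].
- apply: (NF_ext (F := fun x => if x t then phi b else phi a)).
    by move=> x; rewrite hf'; case: (x t).
  apply: (NF_gen Hg Good3C).
  case: (split_ord t) => [->|[t' ->]]; first by right; right.
  by case: (I2 t') => ->; [left | right; left].
- apply: (NF_ext (F := fun x => phi (f1 x) ⊗ phi (f2 x))); first by move=> x; rewrite hh hom.
  apply: (NF_mul Hg Hn) => //.
  + by move=> *; apply: Good3M.
  + exact: Good3_1.
  + exact: Good3_2.
  + exact: Good3_3.
Qed.

Lemma T3_ker u v : comm3 mul (@rel_total S) (@rel_total S) (@rel_total S) u v -> phi u = phi v.
Proof.
move=> H; apply: (H (fun a b => phi a = phi b) ker_cong).
move=> f hf hyp.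
have [P [U1 [U2 [U3 [Z [hG [hc hF]]]]]]] := NF3 hf.
have key : forall y, phi (f (cube_ext y false)) = phi (f (cube_ext y true)) <-> Wf Z y = U3.
  move=> y; rewrite !hF /l3 /i3 /j3 !ceL !ceM /= (g1r Hg) /Wf -(gA Hg _ U3); split.
  - by move/(gcanl Hg) => ->; rewrite (gKr Hg).
  - by move=> <-; rewrite (gKr' Hg).
have h00 : Wf Z y00 = U3 by apply/key; apply: hyp; exists ord0.
have h01 : Wf Z y01 = U3 by apply/key; apply: hyp; exists ord0.
have h10 : Wf Z y10 = U3 by apply/key; apply: hyp; exists ord_max.
apply/key; apply: (gcanr Hg (x := U3)); by rewrite -{1}h00 hG h01 h10.
Qed.

Definition i2 : 'I_2 := lift ord_max ord0.
Definition kap a b := central (gi (phi a) ⊗ phi b).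

Lemma kap_cong : is_congruence mul kap.
Proof.
split; first by move=> a; rewrite /kap (gVl Hg); apply: (cent1 Hg).
split; first by move=> a b h; rewrite /kap -[phi a](gii Hg) -(giM Hg); apply: (centV Hg).
split; first by move=> a b c h1 h2; rewrite /kap -[gi (phi a)](gKr Hg (phi b)) -(gA Hg _ _ (phi c));
  apply: (centM Hg).
move=> a b c d h1 h2; rewrite /kap !hom (giM Hg) -(gA Hg) (gA Hg (gi (phi a))).
by rewrite (gA Hg (gi (phi c))) -(h1 (gi (phi c))) -(gA Hg); apply: (centM Hg).
Qed.

Lemma kap_expr X a u v b : gi (X ⊗ g1 ⊗ g1 ⊗ a) ⊗ (X ⊗ u ⊗ v ⊗ b) = gi a ⊗ (u ⊗ v) ⊗ b.
Proof. by rewrite !(g1r Hg) (giM Hg) -!(gA Hg) (gKl Hg). Qed.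

Lemma sandwich a b m : central a -> central b -> central (gi a ⊗ m ⊗ b) -> central m.
Proof.
move=> ha hb h.
have -> : m = a ⊗ (gi a ⊗ m ⊗ b) ⊗ gi b by rewrite (gA Hg a) (gKl' Hg) (gKr Hg).
by apply: (centM Hg); [apply: (centM Hg) | apply: (centV Hg)].
Qed.

Lemma NF2 (al : 'I_2 -> S -> S -> Prop) f : inM mul al f ->
  NF gm g1 i2 ord_max ord_max (fun _ => True) (fun x => phi (f x)).
Proof.
elim=> [t a b f' _ hf'| f1 f2 h _ N1 _ N2 hh].
- apply: (NF_ext (F := fun x => if x t then phi b else phi a)).
    by move=> x; rewrite hf'; case: (x t).
  apply: (NF_gen Hg) => //.
  case: (split_ord t) => [->|[t' ->]]; first by right; right.
  by rewrite (I1 t'); left.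
- apply: (NF_ext (F := fun x => phi (f1 x) ⊗ phi (f2 x))); first by move=> x; rewrite hh hom.
  by apply: (NF_mul Hg Hn).
Qed.

Definition yT1 : 'I_1 -> bool := fun _ => true.
Definition yF1 : 'I_1 -> bool := fun _ => false.

Lemma comm11_kap u v : comm2 mul (@rel_total S) (@rel_total S) u v -> kap u v.
Proof.
move=> H; apply: (H kap kap_cong) => f hf hyp.
have [P [U1 [U2 [U3 [Z [_ [hc hF]]]]]]] := NF2 hf.
have ex : forall y, gi (phi (f (cube_ext y false))) ⊗ phi (f (cube_ext y true)) =
                    gi (Z (cube_ext y false)) ⊗ (U2 ⊗ U3) ⊗ Z (cube_ext y true).
  by move=> y; rewrite !hF /i2 !ceL !ceM /= kap_expr.
have h0 := hyp yF1 (ex_intro _ ord0 erefl).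
rewrite /kap ex in h0; rewrite /kap ex.
have hU : central (U2 ⊗ U3) by apply: (sandwich (hc _) (hc _) h0).
by apply: (centM Hg) => //; apply: (centM Hg) => //; apply: (centV Hg).
Qed.

Definition alD1 : 'I_2 -> S -> S -> Prop :=
  fun i : 'I_2 => if val i == 0 then comm2 mul (@rel_total S) (@rel_total S) else @rel_total S.
Definition alD2 : 'I_2 -> S -> S -> Prop :=
  fun i : 'I_2 => if val i == 0 then @rel_total S else comm2 mul (@rel_total S) (@rel_total S).

Lemma D1_ker u v : comm2 mul (comm2 mul (@rel_total S) (@rel_total S)) (@rel_total S) u v ->
  phi u = phi v.
Proof.
move=> H; apply: (H _ ker_cong) => f hf hyp.
have Q : exists C, central C /\ forall b, phi (f (cube_ext yT1 b)) = phi (f (cube_ext yF1 b)) ⊗ C.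
  elim: hf {hyp} => [t a b f' hal hf'| f1 f2 h _ [C1 [c1 e1]] _ [C2 [c2 e2]] hh].
  - case: (split_ord t) => [et|[t' et]].
    + exists g1; split; first exact: (cent1 Hg).
      by move=> c; rewrite !hf' et !ceM (g1r Hg).
    + rewrite et (I1 t') in hal hf'; move: hal => /= hal.
      exists (gi (phi a) ⊗ phi b); split; first exact: comm11_kap.
      by move=> c; rewrite !hf' !ceL /= (gKl' Hg).
  - exists (C1 ⊗ C2); split; first exact: (centM Hg).
    by move=> c; rewrite !hh !hom e1 e2 (L1 Hg) //.
have [C [hC eC]] := Q.
by rewrite !eC (hyp yF1 (ex_intro _ ord0 erefl)).
Qed.

Lemma D2_ker u v : comm2 mul (@rel_total S) (comm2 mul (@rel_total S) (@rel_total S)) u v ->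
  phi u = phi v.
Proof.
move=> H; apply: (H _ ker_cong) => f hf hyp.
have Q : exists C, central C /\ forall y, phi (f (cube_ext y true)) = phi (f (cube_ext y false)) ⊗ C.
  elim: hf {hyp} => [t a b f' hal hf'| f1 f2 h _ [C1 [c1 e1]] _ [C2 [c2 e2]] hh].
  - case: (split_ord t) => [et|[t' et]].
    + rewrite et in hal hf'; move: hal => /= hal.
      exists (gi (phi a) ⊗ phi b); split; first exact: comm11_kap.
      by move=> y; rewrite !hf' !ceM /= (gKl' Hg).
    + exists g1; split; first exact: (cent1 Hg).
      by move=> y; rewrite !hf' et !ceL (g1r Hg).
  - exists (C1 ⊗ C2); split; first exact: (centM Hg).
    by move=> y; rewrite !hh !hom e1 e2 (L1 Hg).
have [C [hC eC]] := Q.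
have h0 := hyp yF1 (ex_intro _ ord0 erefl).
rewrite eC -{1}[phi (f _)](g1r Hg) in h0; have h1 := gcanl Hg h0.
by rewrite eC -h1 (g1r Hg).
Qed.
End Cube.

Section Semi.
Variables (S : Type) (mul : S -> S -> S) (e : S).
Hypothesis mulA : forall x y z, mul x (mul y z) = mul (mul x y) z.
Hypothesis mul1s : forall x, mul e x = x.
Hypothesis muls1 : forall x, mul x e = x.
Local Infix "·" := mul (at level 40, left associativity).
Local Notation rt := (@rel_total S).

Ltac sn := rewrite ?mul1s ?muls1 -?mulA ?mul1s ?muls1 -?mulA.

Definition gen k (t : 'I_k) (a b : S) := fun x : 'I_k -> bool => if x t then b else a.
Lemma inM_gen k (al : 'I_k -> S -> S -> Prop) t a b : al t a b -> inM mul al (gen t a b).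
Proof. by move=> h; apply: (@M_gen _ _ _ _ t a b). Qed.
Lemma inM_mul k (al : 'I_k -> S -> S -> Prop) f g : inM mul al f -> inM mul al g ->
  inM mul al (fun x => f x · g x).
Proof. by move=> hf hg; apply: (M_mul hf hg). Qed.

Lemma gen_cong (P : (S -> S -> Prop) -> Prop) :
  is_congruence mul (fun x y => forall d, is_congruence mul d -> P d -> d x y).
Proof.
split; first by move=> x d [h _] _; apply: h.
split; first by move=> x y h d hd hp; have [_ [hs _]] := hd; apply: hs; apply: h.
split; first by move=> x y z h1 h2 d hd hp; have [_ [_ [ht _]]] := hd; apply: (ht _ y); [apply: h1|apply: h2].
by move=> a b c d' h1 h2 d hd hp; have [_ [_ [_ hm]]] := hd; apply: hm; [apply: h1|apply: h2].
Qed.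

Lemma comm_cong n al : is_congruence mul (@commutator S mul n al).
Proof. exact: (gen_cong (fun d => comm_closed mul al d)). Qed.

Lemma ex_false1 (y : 'I_1 -> bool) : (exists j, y j = false) -> y ord0 = false.
Proof. by case=> j; rewrite (I1 j). Qed.
Lemma ex_false2 (y : 'I_2 -> bool) : (exists j, y j = false) -> y ord0 = false \/ y ord_max = false.
Proof. by case=> j; case: (I2 j) => ->; [left|right]. Qed.

Lemma P1 x a : comm2 mul rt rt (x · a) (a · x).
Proof.
move=> d hd hcl; have [hr _] := hd.
pose f := fun z => gen ord_max x e z · (gen i2 e a z · gen ord_max e x z).
have hf : inM mul (fun i : 'I_2 => if val i == 0 then rt else rt) f.
  by apply: inM_mul; [|apply: inM_mul]; apply: inM_gen.
have h := hcl f hf.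
have e0 : f (cube_ext (fun _ => true) false) = x · a by rewrite /f /gen /i2 !ceL !ceM /=; sn.
have e1 : f (cube_ext (fun _ => true) true) = a · x by rewrite /f /gen /i2 !ceL !ceM /=; sn.
rewrite -e0 -e1; apply: h => y hy.
rewrite /f /gen /i2 !ceL !ceM (ex_false1 hy) /=; sn; exact: hr.
Qed.

Lemma P2 x y z : comm2 mul (comm2 mul rt rt) rt (x · (y · (z · (y · x)))) (y · (x · (z · (x · y)))).
Proof.
move=> d hd hcl; have [hr _] := hd.
pose f := fun w => gen ord_max e (y · (x · z)) w · (gen i2 (y · x) (x · y) w · gen ord_max (z · (y · x)) e w).
have hf : inM mul (fun i : 'I_2 => if val i == 0 then comm2 mul rt rt else rt) f.
  apply: inM_mul; [|apply: inM_mul]; apply: inM_gen => //=.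
  exact: P1.
have h := hcl f hf.
have e0 : f (cube_ext (fun _ => true) false) = x · (y · (z · (y · x))) by rewrite /f /gen /i2 !ceL !ceM /=; sn.
have e1 : f (cube_ext (fun _ => true) true) = y · (x · (z · (x · y))) by rewrite /f /gen /i2 !ceL !ceM /=; sn.
rewrite -e0 -e1; apply: h => w hw.
rewrite /f /gen /i2 !ceL !ceM (ex_false1 hw) /=; sn; exact: hr.
Qed.

Definition al3' : 'I_3 -> S -> S -> Prop :=
  fun i => match val i with 0 => rt | 1 => rt | _ => rt end.
Lemma al3T t a b : al3' t a b.
Proof. by rewrite /al3'; case: (val t) => [|[|?]]. Qed.
Local Notation T3 := (comm3 mul rt rt rt).

Lemma ptE (w : 'I_2 -> bool) b :
  (cube_ext w b i3 = w ord0) * (cube_ext w b j3 = w ord_max) * (cube_ext w b l3 = b).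
Proof. rewrite /i3 /j3 /l3 !ceL ceM; by split; first split. Qed.

Lemma T3_cancel_l a x y : T3 (a · x) (a · y) -> T3 x y.
Proof.
move=> H d hd hcl; have hax := H d hd hcl; have [hr [_ [_ hm]]] := hd.
pose f := fun w => gen i3 a e w · (gen j3 a e w · gen l3 x y w).
have hf : inM mul al3' f by apply: inM_mul; [|apply: inM_mul]; apply: inM_gen; apply: al3T.
have h := hcl f hf.
have e0 : f (cube_ext (fun _ => true) false) = x by rewrite /f /gen !ptE /=; sn.
have e1 : f (cube_ext (fun _ => true) true) = y by rewrite /f /gen !ptE /=; sn.
rewrite -e0 -e1; apply: h => w hw.
rewrite /f /gen !ptE.
case: (ex_false2 hw) => ->; case: (w _) => /=; sn => //; by apply: hm.
Qed.

Lemma T3_cancel_r a x y : T3 (x · a) (y · a) -> T3 x y.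
Proof.
move=> H d hd hcl; have hax := H d hd hcl; have [hr [_ [_ hm]]] := hd.
pose f := fun w => gen l3 x y w · (gen i3 a e w · gen j3 a e w).
have hf : inM mul al3' f by apply: inM_mul; [|apply: inM_mul]; apply: inM_gen; apply: al3T.
have h := hcl f hf.
have e0 : f (cube_ext (fun _ => true) false) = x by rewrite /f /gen !ptE /=; sn.
have e1 : f (cube_ext (fun _ => true) true) = y by rewrite /f /gen !ptE /=; sn.
rewrite -e0 -e1; apply: h => w hw.
rewrite /f /gen !ptE.
case: (ex_false2 hw) => ->; case: (w _) => /=; sn; first [exact: hax | (have := hm _ _ _ _ hax (hr a); sn; apply)].
Qed.

Lemma T3_rho x y z : T3 (x · (y · (z · (y · x)))) (y · (x · (z · (x · y)))).
Proof.
move=> d hd hcl; have [hr _] := hd.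
pose f := fun w => gen l3 e (y · (x · z)) w · (gen i3 y e w · (gen j3 e x w ·
   (gen i3 e y w · (gen j3 x e w · gen l3 (z · (y · x)) e w)))).
have hf : inM mul al3' f.
  by do 5! (apply: inM_mul; [apply: inM_gen; apply: al3T|]); apply: inM_gen; apply: al3T.
have h := hcl f hf.
have e0 : f (cube_ext (fun _ => true) false) = x · (y · (z · (y · x))) by rewrite /f /gen !ptE /=; sn.
have e1 : f (cube_ext (fun _ => true) true) = y · (x · (z · (x · y))) by rewrite /f /gen !ptE /=; sn.
rewrite -e0 -e1; apply: h => w hw.
rewrite /f /gen !ptE.
case: (ex_false2 hw) => ->; case: (w _) => /=; sn => //.
Qed.
End Semi.

Section Frac.
Variables (S : Type) (mul : S -> S -> S) (e : S).
Hypothesis mulA : forall x y z, mul x (mul y z) = mul (mul x y) z.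
Hypothesis mul1s : forall x, mul e x = x.
Hypothesis muls1 : forall x, mul x e = x.
Local Infix "·" := mul (at level 40, left associativity).
Variable r : S -> S -> Prop.
Hypothesis hr : is_congruence mul r.
Hypothesis hc : cancellative mul r.
Hypothesis hM : forall x y z, r (x · (y · (z · (y · x)))) (y · (x · (z · (x · y)))).

Lemma rR x : r x x. Proof. by have [h _] := hr; apply: h. Qed.
Lemma rS x y : r x y -> r y x. Proof. by have [_ [h _]] := hr; apply: h. Qed.
Lemma rT x y z : r x y -> r y z -> r x z. Proof. by move=> h1 h2; have [_ [_ [h _]]] := hr; exact: h h1 h2. Qed.
Lemma rM a b c d : r a b -> r c d -> r (a · c) (b · d). Proof. by move=> h1 h2; have [_ [_ [_ h]]] := hr; exact: h h1 h2. Qed.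
#[local] Instance r_equiv : Equivalence r.
Proof. split; [exact: rR | exact: rS | exact: rT]. Qed.
#[local] Instance mul_proper : Proper (r ==> r ==> r) mul.
Proof. by move=> a b h c d h'; apply: rM. Qed.
Lemma rE x y : x = y -> r x y. Proof. by move=> ->; apply: rR. Qed.
Lemma rcl a x y : r (a · x) (a · y) -> r x y. Proof. by case: hc => h _; apply: h. Qed.
Lemma rcr a x y : r (x · a) (y · a) -> r x y. Proof. by case: hc => _ h; apply: h. Qed.

Definition Ore1 b c := c · (c · b).
Definition Ore2 b c := b · (b · c).
Lemma ore b c : r (b · Ore1 b c) (c · Ore2 b c).
Proof. by have := hM b c e; rewrite !mul1s. Qed.

Definition eqv (p q : S * S) := exists u v, r (p.1 · u) (q.1 · v) /\ r (p.2 · u) (q.2 · v).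
Lemma eqv_refl p : eqv p p. Proof. by exists e, e; split; apply: rR. Qed.
Lemma eqv_sym p q : eqv p q -> eqv q p.
Proof. by move=> [u [v [h1 h2]]]; exists v, u; split; apply: rS. Qed.
Lemma ore_ex b c : exists m n, r (b · m) (c · n).
Proof. by exists (Ore1 b c), (Ore2 b c); apply: ore. Qed.
Lemma eqv_trans p q w : eqv p q -> eqv q w -> eqv p w.
Proof.
move=> [u [v [h1 h2]]] [u' [v' [h1' h2']]].
have [m [n ho]] := ore_ex v u'.
exists (u · m), (v' · n); split.
- rewrite !mulA; setoid_rewrite h1; rewrite -mulA; setoid_rewrite ho; rewrite mulA;
  setoid_rewrite h1'; reflexivity.
- rewrite !mulA; setoid_rewrite h2; rewrite -mulA; setoid_rewrite ho; rewrite mulA;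
  setoid_rewrite h2'; reflexivity.
Qed.
Lemma eqv_r a a' b b' : r a a' -> r b b' -> eqv (a, b) (a', b').
Proof. by move=> h h'; exists e, e; rewrite /= !muls1. Qed.

Definition pm (p q : S * S) := (p.1 · Ore1 p.2 q.1, q.2 · Ore2 p.2 q.1).

Lemma Lfund a b c d s t : r (b · s) (c · t) -> eqv (pm (a, b) (c, d)) (a · s, d · t).
Proof.
move=> h; rewrite /pm /=.
move: (ore b c); move: (Ore1 b c) (Ore2 b c) => s0 t0 h0.
have [m [n h1]] := ore_ex t0 t.
have h2 : r (s0 · m) (s · n).
  apply: (@rcl b); rewrite !mulA; setoid_rewrite h0; rewrite -mulA; setoid_rewrite h1.
  rewrite mulA; setoid_rewrite h; reflexivity.
exists m, n; split; rewrite /= -!mulA.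
- setoid_rewrite h2; reflexivity.
- setoid_rewrite h1; reflexivity.
Qed.

Lemma pm_def a b c d : pm (a, b) (c, d) = (a · Ore1 b c, d · Ore2 b c).
Proof. by []. Qed.

Lemma eqv_resp_l p p' q : eqv p p' -> eqv (pm p q) (pm p' q).
Proof.
case: p => a b; case: p' => a' b'; case: q => c d.
move=> [u [v [/= h1 h2]]].
have [s' [t' h3]] := ore_ex (b · u) c.
have A : eqv (pm (a, b) (c, d)) (a · (u · s'), d · t') by apply: Lfund; rewrite mulA.
have B : eqv (pm (a', b') (c, d)) (a' · (v · s'), d · t').
  by apply: Lfund; rewrite mulA; setoid_rewrite <- h2.
have C : eqv (a · (u · s'), d · t') (a' · (v · s'), d · t').
  apply: eqv_r; last by apply: rR.
  by rewrite !mulA; setoid_rewrite h1; reflexivity.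
exact: (eqv_trans (eqv_trans A C) (eqv_sym B)).
Qed.

Lemma eqv_resp_r p q q' : eqv q q' -> eqv (pm p q) (pm p q').
Proof.
case: p => a b; case: q => c d; case: q' => c' d'.
move=> [u [v [/= h1 h2]]].
have [s' [t' h3]] := ore_ex b (c · u).
have A : eqv (pm (a, b) (c, d)) (a · s', d · (u · t')) by apply: Lfund; rewrite mulA.
have B : eqv (pm (a, b) (c', d')) (a · s', d' · (v · t')).
  by apply: Lfund; rewrite mulA; setoid_rewrite <- h1.
have C : eqv (a · s', d · (u · t')) (a · s', d' · (v · t')).
  apply: eqv_r; first by apply: rR.
  by rewrite !mulA; setoid_rewrite h2; reflexivity.
exact: (eqv_trans (eqv_trans A C) (eqv_sym B)).
Qed.

Lemma pm_resp p p' q q' : eqv p p' -> eqv q q' -> eqv (pm p q) (pm p' q').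
Proof. move=> h h'; apply: (eqv_trans (eqv_resp_l q h)); exact: eqv_resp_r. Qed.

Lemma pm_assoc p q w : eqv (pm (pm p q) w) (pm p (pm q w)).
Proof.
case: p => a b; case: q => c d; case: w => x y.
rewrite [pm (a, b) (c, d)]pm_def.
move: (ore b c); move: (Ore1 b c) (Ore2 b c) => s t h.
rewrite pm_def.
move: (ore (d · t) x); move: (Ore1 (d · t) x) (Ore2 (d · t) x) => s' t' h'.
have A : eqv (pm (c, d) (x, y)) (c · (t · s'), y · t') by apply: Lfund; rewrite mulA.
have B : eqv (pm (a, b) (c · (t · s'), y · t')) (a · (s · s'), y · t' · e).
  by apply: Lfund; rewrite muls1 !mulA; setoid_rewrite h; reflexivity.
apply: eqv_sym; apply: (eqv_trans (eqv_resp_r _ A)); apply: (eqv_trans B).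
by apply: eqv_r; rewrite ?muls1 ?mulA; apply: rR.
Qed.

Lemma pm_1l p : eqv (pm (e, e) p) p.
Proof.
case: p => c d; apply: (eqv_trans (Lfund _ _ (s := c) (t := e) _)).
  by rewrite mul1s muls1; apply: rR.
by rewrite mul1s muls1; apply: eqv_refl.
Qed.
Lemma pm_1r p : eqv (pm p (e, e)) p.
Proof.
case: p => a b; apply: (eqv_trans (Lfund _ _ (s := e) (t := b) _)).
  by rewrite mul1s muls1; apply: rR.
by rewrite mul1s muls1; apply: eqv_refl.
Qed.
Lemma eqv_bb b : eqv (b, b) (e, e).
Proof. by exists e, b; rewrite /= !muls1 !mul1s; split; apply: rR. Qed.
Lemma pm_Vl p : eqv (pm (p.2, p.1) p) (e, e).
Proof.
case: p => a b /=; apply: (eqv_trans (Lfund _ _ (s := e) (t := e) _)); first by apply: rR.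
rewrite muls1; exact: eqv_bb.
Qed.
Lemma pm_Vr p : eqv (pm p (p.2, p.1)) (e, e).
Proof.
case: p => a b /=; apply: (eqv_trans (Lfund _ _ (s := e) (t := e) _)); first by apply: rR.
rewrite muls1; exact: eqv_bb.
Qed.
Lemma swap_resp p q : eqv p q -> eqv (p.2, p.1) (q.2, q.1).
Proof. by move=> [u [v [h1 h2]]]; exists u, v. Qed.

Definition Gt := {P : S * S -> Prop | exists p, P = eqv p}.
Definition cls p : Gt := exist _ (eqv p) (ex_intro _ p erefl).
Definition rep (X : Gt) : S * S := proj1_sig (constructive_indefinite_description _ (proj2_sig X)).
Lemma rep_spec X : proj1_sig X = eqv (rep X).
Proof. exact: (proj2_sig (constructive_indefinite_description _ (proj2_sig X))). Qed.
Lemma sig_ext (X Y : Gt) : proj1_sig X = proj1_sig Y -> X = Y.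
Proof. case: X => P hP; case: Y => Q hQ /= E; subst Q; f_equal; apply: proof_irrelevance. Qed.
Lemma cls_rep X : cls (rep X) = X.
Proof. by apply: sig_ext; rewrite /= rep_spec. Qed.
Lemma cls_eq p q : eqv p q -> cls p = cls q.
Proof.
move=> h; apply: sig_ext => /=; apply: functional_extensionality => z.
apply: propositional_extensionality; split => h'.
- exact: (eqv_trans (eqv_sym h) h').
- exact: (eqv_trans h h').
Qed.
Lemma cls_inj p q : cls p = cls q -> eqv p q.
Proof. move=> h; have /= -> := f_equal (@proj1_sig _ _) h; exact: eqv_refl. Qed.
Lemma rep_cls p : eqv (rep (cls p)) p.
Proof. exact: (cls_inj (cls_rep (cls p))). Qed.
Lemma cls_ind (P : Gt -> Prop) : (forall p, P (cls p)) -> forall X, P X.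
Proof. by move=> h X; rewrite -(cls_rep X). Qed.

Definition gtm (X Y : Gt) : Gt := cls (pm (rep X) (rep Y)).
Definition gti (X : Gt) : Gt := cls ((rep X).2, (rep X).1).
Definition gt1 : Gt := cls (e, e).
Lemma gtm_cls p q : gtm (cls p) (cls q) = cls (pm p q).
Proof. by apply: cls_eq; apply: pm_resp; apply: rep_cls. Qed.
Lemma gti_cls p : gti (cls p) = cls (p.2, p.1).
Proof. by apply: cls_eq; apply: swap_resp; apply: rep_cls. Qed.

Lemma Gt_group : is_group gtm gt1 gti.
Proof.
split; first by elim/cls_ind => p; elim/cls_ind => q; elim/cls_ind => w;
  rewrite !gtm_cls; apply: cls_eq; apply: eqv_sym; apply: pm_assoc.
split; first by elim/cls_ind => p; rewrite gtm_cls; apply: cls_eq; apply: pm_1l.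
split; first by elim/cls_ind => p; rewrite gtm_cls; apply: cls_eq; apply: pm_1r.
split; first by elim/cls_ind => p; rewrite gti_cls gtm_cls; apply: cls_eq; apply: pm_Vl.
by elim/cls_ind => p; rewrite gti_cls gtm_cls; apply: cls_eq; apply: pm_Vr.
Qed.

Definition phi (a : S) : Gt := cls (a, e).
Lemma phi_hom a b : phi (a · b) = gtm (phi a) (phi b).
Proof.
rewrite /phi gtm_cls; apply: cls_eq; apply: eqv_sym.
apply: (eqv_trans (Lfund _ _ (s := b) (t := e) _)); first by rewrite mul1s muls1; apply: rR.
by rewrite muls1; apply: eqv_refl.
Qed.
Lemma phi_ker a b : phi a = phi b <-> r a b.
Proof.
split.
- move/cls_inj => [u [v [/= h1 h2]]].
  rewrite !mul1s in h2; apply: (@rcr u); setoid_rewrite h2 at 2; exact: h1.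
- by move=> h; apply: cls_eq; apply: eqv_r => //; apply: rR.
Qed.

Lemma Gt_nil : nilpotent2 gtm gt1 gti.
Proof.
apply: (nil_from_malcev Gt_group (T := fun X => exists a, X = phi a)).
- by exists e.
- elim/cls_ind => [[a b]]; exists (phi a), (phi b); split; first by exists a.
  split; first by exists b.
  rewrite /phi gti_cls gtm_cls; apply: cls_eq; apply: eqv_sym.
  apply: (eqv_trans (Lfund _ _ (s := e) (t := e) _)); first by apply: rR.
  by rewrite !muls1; apply: eqv_refl.
- move=> _ _ _ [x ->] [y ->] [z ->]; rewrite -!phi_hom; apply/phi_ker.
  by have := hM x y z; rewrite !mulA.
Qed.

Lemma embeds : embeds_2nil_group mul r.
Proof.
exists Gt, gtm, gt1, gti; split; first exact: Gt_group.
split; first exact: Gt_nil.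
exists phi; split; [exact: phi_hom | exact: phi_ker].
Qed.
End Frac.

Section Main.
Variables (S : Type) (mul : S -> S -> S) (e : S).
Hypothesis mulA : forall x y z, mul x (mul y z) = mul (mul x y) z.
Hypothesis mul1s : forall x, mul e x = x.
Hypothesis muls1 : forall x, mul x e = x.
Local Notation rt := (@rel_total S).
Local Notation T3 := (comm3 mul rt rt rt).
Local Notation R := (comm2 mul (comm2 mul rt rt) rt).
Local Notation R' := (comm2 mul rt (comm2 mul rt rt)).

Lemma T3_cong : is_congruence mul T3.
Proof. exact: comm_cong. Qed.
Lemma T3_canc : cancellative mul T3.
Proof. split=> a x y; [exact: (T3_cancel_l mul1s) | exact: (T3_cancel_r mulA mul1s muls1)]. Qed.

Lemma rho_gen_sub d : is_congruence mul d ->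
  (forall x y z, d (mul x (mul y (mul z (mul y x)))) (mul y (mul x (mul z (mul x y))))) ->
  rel_sub (rho2 mul) d.
Proof. move=> hd h u v H; apply: H => // a b [x [y [z [-> ->]]]]; exact: h. Qed.

Lemma rho_gen d : rel_sub (rho2 mul) d -> 
  (forall x y z, d (mul x (mul y (mul z (mul y x)))) (mul y (mul x (mul z (mul x y))))).
Proof. move=> h x y z; apply: h => d' hd' hs; apply: hs; by exists x, y, z. Qed.

Lemma emb_sub d : embeds_2nil_group mul d -> rel_sub T3 d.
Proof.
move=> [G [gm [g1 [gi [Hg [Hn [phi [hom hk]]]]]]]] u v h.
by apply/hk; apply: (T3_ker Hg Hn hom).
Qed.

Lemma canc_rho_emb d : is_congruence mul d -> cancellative mul d -> rel_sub (rho2 mul) d ->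
  embeds_2nil_group mul d.
Proof. move=> hd hc hs; apply: (embeds mulA mul1s muls1 hd hc); exact: rho_gen. Qed.

Lemma T3_rho2 : rel_sub (rho2 mul) T3.
Proof. apply: rho_gen_sub; [exact: T3_cong | exact: (T3_rho mulA mul1s muls1)]. Qed.

Lemma T3_emb : embeds_2nil_group mul T3.
Proof. apply: canc_rho_emb; [exact: T3_cong | exact: T3_canc | exact: T3_rho2]. Qed.

Lemma R_T3 : rel_sub R T3.
Proof.
have [G [gm [g1 [gi [Hg [Hn [phi [hom hk]]]]]]]] := T3_emb.
by move=> u v h; apply/hk; apply: (D1_ker Hg Hn hom).
Qed.
Lemma R'_T3 : rel_sub R' T3.
Proof.
have [G [gm [g1 [gi [Hg [Hn [phi [hom hk]]]]]]]] := T3_emb.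
by move=> u v h; apply/hk; apply: (D2_ker Hg Hn hom).
Qed.

Lemma R_rho d : is_congruence mul d -> rel_sub R d -> rel_sub (rho2 mul) d.
Proof. move=> hd hs; apply: rho_gen_sub => // x y z; apply: hs; exact: (P2 mulA mul1s muls1). Qed.

Lemma canc_gen_sub (Q : S -> S -> Prop) d : is_congruence mul d -> cancellative mul d ->
  rel_sub Q d -> rel_sub (canc_cong_gen mul Q) d.
Proof. by move=> hd hc hs u v h; apply: h. Qed.

Lemma T3_sub_canc (Q : S -> S -> Prop) :
  (forall d, is_congruence mul d -> cancellative mul d -> rel_sub Q d -> rel_sub (rho2 mul) d) ->
  rel_sub T3 (canc_cong_gen mul Q).
Proof.
move=> h u v hT d hd hc hs; apply: (emb_sub (canc_rho_emb hd hc (h d hd hc hs))); exact: hT.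
Qed.

Theorem main_thm :
  (embeds_2nil_group mul T3 /\
   forall d, is_congruence mul d -> embeds_2nil_group mul d -> rel_sub T3 d) /\
  (rel_eq T3 (canc_cong_gen mul (cong_join mul R R')) /\
   rel_eq T3 (canc_cong_gen mul R) /\
   rel_eq T3 (canc_cong_gen mul (rho2 mul))).
Proof.
split; first by split; [exact: T3_emb | move=> d _; exact: emb_sub].
have RJ : forall d, rel_sub (cong_join mul R R') d -> is_congruence mul d -> rel_sub R d.
  by move=> d hs hd u v h; apply: hs => d' hd' hs'; apply: hs'; left.
split; last split; move=> u v; split.
- apply: T3_sub_canc => d hd hc hs; apply: R_rho => //; exact: RJ.
- apply: canc_gen_sub; [exact: T3_cong | exact: T3_canc |].
  move=> a b h; apply: h; first exact: T3_cong.
  by move=> x y [hx|hx]; [apply: R_T3 | apply: R'_T3].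
- apply: T3_sub_canc => d hd hc hs; exact: R_rho.
- apply: canc_gen_sub; [exact: T3_cong | exact: T3_canc | exact: R_T3].
- by apply: T3_sub_canc.
- apply: canc_gen_sub; [exact: T3_cong | exact: T3_canc | exact: T3_rho2].
Qed.
End Main.
Theorem corollary4p7 (S : Type) (mul : S -> S -> S) (e : S)
  (mulA : forall x y z, mul x (mul y z) = mul (mul x y) z)
  (mul1s : forall x, mul e x = x) (muls1 : forall x, mul x e = x) :
  (* (1) *)
  (embeds_2nil_group mul (comm3 mul (@rel_total S) (@rel_total S) (@rel_total S)) /\
   forall d, is_congruence mul d -> embeds_2nil_group mul d ->
     rel_sub (comm3 mul (@rel_total S) (@rel_total S) (@rel_total S)) d) /\
  (* (2) *)
  (rel_eq (comm3 mul (@rel_total S) (@rel_total S) (@rel_total S))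
     (canc_cong_gen mul
        (cong_join mul (comm2 mul (comm2 mul (@rel_total S) (@rel_total S)) (@rel_total S))
                       (comm2 mul (@rel_total S) (comm2 mul (@rel_total S) (@rel_total S))))) /\
   rel_eq (comm3 mul (@rel_total S) (@rel_total S) (@rel_total S))
     (canc_cong_gen mul (comm2 mul (comm2 mul (@rel_total S) (@rel_total S)) (@rel_total S))) /\
   rel_eq (comm3 mul (@rel_total S) (@rel_total S) (@rel_total S))
     (canc_cong_gen mul (rho2 mul))).
Proof. exact: (main_thm mulA mul1s muls1). Qed.
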